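(* Let $n\ge1$, $R>0$, and let $f\colon\mathbb{R}^n\to(0,\infty)$ be a twice continuously differentiable convex function with $|t|^2+f(t)^2>R^2$ for all $t\in\mathbb{R}^n$. Let $$\alpha(t)=\frac{\langle t,\nabla f(t)\rangle-f(t)}{\sqrt{1+|\nabla f(t)|^2}},\qquad D=\{t\in\mathbb{R}^n\mid\alpha(t)<R\}.$$ Then the map $x\colon D\to\mathbb{R}^n$, $$x(t)=t+\frac{1}{2\sqrt{1+|\nabla f(t)|^2}}\cdot\frac{|t|^2+f(t)^2-R^2}{R-\alpha(t)}\,\nabla f(t),$$ is a bijection from $D$ onto $\mathbb{R}^n$ whose Jacobian determinant vanishes nowhere on $D$.
   Context: $\langle\cdot,\cdot\rangle$ and $|\cdot|$ are the Euclidean inner product and norm on $\mathbb{R}^n$. *)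

(* Defs.v *)
From HB Require Import structures.
From mathcomp Require Import all_boot all_order all_algebra.
From mathcomp Require Import all_classical all_reals all_analysis.
Set Implicit Arguments. Unset Strict Implicit. Unset Printing Implicit Defensive.
Import Order.TTheory GRing.Theory Num.Theory.
Import numFieldNormedType.Exports.
Local Open Scope classical_set_scope.
Local Open Scope ring_scope.

Definition dotv {R : realType} {n : nat} (u v : 'rV[R]_n) : R :=
  \sum_(i < n) u 0 i * v 0 i.

Definition sqnorm {R : realType} {n : nat} (u : 'rV[R]_n) : R := dotv u u.

Definition gradient {R : realType} {n : nat} (f : 'rV[R]_n -> R^o)
    (t : 'rV[R]_n) : 'rV[R]_n :=
  \row_(i < n) ('D_(delta_mx 0 i) f t : R).

Definition C2 {R : realType} {n : nat} (f : 'rV[R]_n -> R^o) : Prop :=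
  (forall t, differentiable f t) /\
  (forall t, differentiable (gradient f) t) /\
  continuous (fun t => 'J (gradient f) t).

Definition alpha {R : realType} {n : nat} (f : 'rV[R]_n -> R^o)
    (t : 'rV[R]_n) : R :=
  (dotv t (gradient f t) - f t) / Num.sqrt (1 + sqnorm (gradient f t)).

Definition xmap {R : realType} {n : nat} (Rr : R) (f : 'rV[R]_n -> R^o)
    (t : 'rV[R]_n) : 'rV[R]_n :=
  t + ((1 / (2 * Num.sqrt (1 + sqnorm (gradient f t)))) *
       ((sqnorm t + f t ^+ 2 - Rr ^+ 2) / (Rr - alpha f t))) *: gradient f t.

(* Main.v *)
Require Import Defs.
From HB Require Import structures.
From mathcomp Require Import all_boot all_order all_algebra.
From mathcomp Require Import all_classical all_reals all_analysis.
From mathcomp Require Import ring lra.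
Set Implicit Arguments. Unset Strict Implicit. Unset Printing Implicit Defensive.
Import Order.TTheory GRing.Theory Num.Theory.
Import numFieldNormedType.Exports.
Local Open Scope classical_set_scope.
Local Open Scope ring_scope.

Section Basic.
Variables (R : realType) (n : nat).
Local Notation V := 'rV[R]_n.

Lemma dotvC (u v : V) : dotv u v = dotv v u.
Proof. by apply: eq_bigr => i _; rewrite mulrC. Qed.
Lemma dotvDl (u v w : V) : dotv (u + v) w = dotv u w + dotv v w.
Proof. by rewrite /dotv -big_split; apply: eq_bigr => i _; rewrite !mxE mulrDl. Qed.
Lemma dotvDr (u v w : V) : dotv w (u + v) = dotv w u + dotv w v.
Proof. by rewrite dotvC dotvDl !(dotvC w). Qed.
Lemma dotvZl (a : R) (u w : V) : dotv (a *: u) w = a * dotv u w.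
Proof. by rewrite /dotv mulr_sumr; apply: eq_bigr => i _; rewrite !mxE mulrA. Qed.
Lemma dotvZr (a : R) (u w : V) : dotv w (a *: u) = a * dotv w u.
Proof. by rewrite dotvC dotvZl dotvC. Qed.
Lemma dotvNl (u w : V) : dotv (- u) w = - dotv u w.
Proof. by rewrite -scaleN1r dotvZl mulN1r. Qed.
Lemma dotvNr (u w : V) : dotv w (- u) = - dotv w u.
Proof. by rewrite dotvC dotvNl dotvC. Qed.
Lemma dotvBl (u v w : V) : dotv (u - v) w = dotv u w - dotv v w.
Proof. by rewrite dotvDl dotvNl. Qed.
Lemma dotvBr (u v w : V) : dotv w (u - v) = dotv w u - dotv w v.
Proof. by rewrite dotvDr dotvNr. Qed.
Lemma dotv0l (w : V) : dotv 0 w = 0.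
Proof. by rewrite /dotv big1 // => i _; rewrite mxE mul0r. Qed.
Lemma sqnorm_ge0 (u : V) : 0 <= sqnorm u.
Proof. by apply: sumr_ge0 => i _; rewrite -expr2 sqr_ge0. Qed.
Lemma sqnorm_eq0 (u : V) : sqnorm u = 0 -> u = 0.
Proof.
move=> /eqP; rewrite /sqnorm /dotv psumr_eq0; last by move=> i _; rewrite -expr2 sqr_ge0.
move=> /allP H; apply/rowP => i; rewrite mxE.
by have /(_ (mem_index_enum i)) := H i; rewrite -expr2 sqrf_eq0 => /eqP.
Qed.
Lemma dotv_delta (u : V) i : dotv u (delta_mx 0 i) = u 0 i.
Proof.
rewrite /dotv (bigD1 i) //= big1 ?addr0; first by rewrite mxE !eqxx mulr1.
by move=> j ji; rewrite mxE (negbTE ji) andbF mulr0.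
Qed.

Variable f : V -> R^o.

Lemma derive_grad (t v : V) : differentiable f t ->
  'D_v f t = dotv (gradient f t) v.
Proof.
move=> df; rewrite deriveE // {1}(row_sum_delta v) linear_sum /= /dotv.
apply: eq_bigr => i _; rewrite linearZ /= -deriveE // /gradient mxE mulrC.
by [].
Qed.

Lemma convex_grad_ineq (t u : V) :
  differentiable f t ->
  convex_function setT (f : convex_lmodType V -> R^o) ->
  f t + dotv (gradient f t) (u - t) <= f u.
Proof.
move=> df cvx; rewrite -derive_grad // -lerBrDl.
have dv : derivable f t (u - t) by exact: diff_derivable.
rewrite /derive (cvg_at_rightE (fun h : R => h^-1 *: (f (h *: (u - t) + t) - f t))); last exact: dv.
apply: limr_le.
  have := dv; rewrite /derivable => dfc.
  rewrite -(cvg_at_rightE (fun h : R => h^-1 *: (f (h *: (u - t) + t) - f t))) //.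
  apply: cvg_trans dfc; apply: cvg_app.
  move=> A [e egt0 Ae]; exists e => // x xe xgt0; apply: Ae => //.
  exact/lt0r_neq0.
near=> h.
have h0 : 0 < h by near: h; exists 1 => /=.
have h1 : h <= 1 by near: h; exists 1 => //= x; rewrite /ball /= sub0r normrN => /ltW /(le_trans (ler_norm _)).
have := cvx (Itv01 (ltW h0) h1) u t; rewrite !inE => /(_ I I) /=.
move=> H.
have {H} : f (h *: u + (1-h) *: t) <= h * f u + (1 - h) * f t := H.
have -> : h *: u + (1 - h) *: t = h *: (u - t) + t.
  by rewrite scalerBr scalerBl scale1r addrA addrAC.
move=> H; rewrite /GRing.scale /= ler_pdivrMl //.
rewrite lerBlDr; apply: le_trans H _; rewrite le_eqVlt; apply/orP; left; apply/eqP; ring.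
Unshelve. all: by end_near. Qed.


Lemma sqnormD (u v : V) : sqnorm (u + v) = sqnorm u + 2 * dotv u v + sqnorm v.
Proof. rewrite /sqnorm dotvDl !dotvDr (dotvC v u); ring. Qed.
Lemma sqnormB (u v : V) : sqnorm (u - v) = sqnorm u - 2 * dotv u v + sqnorm v.
Proof. rewrite /sqnorm dotvBl !dotvBr (dotvC v u); ring. Qed.
Lemma sqnormZ (a : R) (u : V) : sqnorm (a *: u) = a ^+ 2 * sqnorm u.
Proof. rewrite /sqnorm dotvZl dotvZr; ring. Qed.
Lemma sqnormN (u : V) : sqnorm (- u) = sqnorm u.
Proof. by rewrite /sqnorm dotvNl dotvNr opprK. Qed.
End Basic.

Section Diff.
Variables (R : realType) (n : nat).
Local Notation V := 'rV[R]_n.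
Implicit Types (a b : V -> R^o) (x : V).

Lemma dD a b x : differentiable a x -> differentiable b x ->
  differentiable (fun z => a z + b z) x.
Proof. exact: differentiableD. Qed.
Lemma dB a b x : differentiable a x -> differentiable b x ->
  differentiable (fun z => a z - b z) x.
Proof. exact: differentiableB. Qed.
Lemma dM a b x : differentiable a x -> differentiable b x ->
  differentiable (fun z => a z * b z) x.
Proof. exact: differentiableM. Qed.
Lemma dV a x : differentiable a x -> a x != 0 ->
  differentiable (fun z => (a z)^-1) x.
Proof. exact: differentiableV. Qed.
Lemma dC (c : R) x : differentiable (fun _ : V => c : R^o) x.
Proof. exact: differentiable_cst. Qed.
Lemma dco i x : differentiable (fun z : V => z 0 i : R^o) x.
Proof. exact: differentiable_coord. Qed.
Lemma dsum (F : 'I_n -> V -> R^o) x : (forall i, differentiable (F i) x) ->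
  differentiable (fun z => \sum_(i < n) F i z) x.
Proof.
move=> H; have -> : (fun z => \sum_(i < n) F i z) = \sum_(i < n) F i.
  by apply/funext => z; rewrite fct_sumE.
exact: differentiable_sum.
Qed.
Lemma dsqrt a x : differentiable a x -> 0 < a x ->
  differentiable (fun z => Num.sqrt (a z) : R^o) x.
Proof.
move=> da ax; apply: (differentiable_comp da).
apply/derivable1_diffP; have := is_derive1_sqrt ax; by case.
Qed.
Lemma dcompv (F : V -> V) a x : differentiable F x -> differentiable a (F x) ->
  differentiable (fun z => a (F z)) x.
Proof. by move=> dF da; exact: differentiable_comp. Qed.
Lemma dcoF (F : V -> V) i x : differentiable F x ->
  differentiable (fun z => F z 0 i : R^o) x.
Proof. by move=> dF; apply: (dcompv (a := fun w : V => w 0 i : R^o)) => //; exact: dco. Qed.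
Lemma ddot (F H : V -> V) x : differentiable F x -> differentiable H x ->
  differentiable (fun z => dotv (F z) (H z) : R^o) x.
Proof. by move=> dF dH; apply: dsum => i; apply: dM; apply: dcoF. Qed.

Lemma fermat_dir (F : V -> R^o) t v : derivable F t v ->
  (forall h : R, F t <= F (h *: v + t)) -> 'D_v F t = 0.
Proof.
move=> dv Fmin; apply/eqP; rewrite eq_le; apply/andP; split.
  rewrite /derive (cvg_at_leftE (fun h : R => h^-1 *: (F (h *: v + t) - F t))); last exact: dv.
  apply: limr_le.
    have := dv; rewrite /derivable => dfc.
    rewrite -(cvg_at_leftE (fun h : R => h^-1 *: (F (h *: v + t) - F t))) //.
    apply: cvg_trans dfc; apply: cvg_app.
    move=> A [e egt0 Ae]; exists e => // x xe xgt0; apply: Ae => //.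
    exact/ltr0_neq0.
  near=> h.
  have h0 : h < 0 by near: h; exists 1 => /=.
  rewrite /GRing.scale /=; apply: mulr_le0_ge0; first by rewrite invr_le0 ltW.
  by rewrite subr_ge0 Fmin.
rewrite /derive (cvg_at_rightE (fun h : R => h^-1 *: (F (h *: v + t) - F t))); last exact: dv.
apply: limr_ge.
  have := dv; rewrite /derivable => dfc.
  rewrite -(cvg_at_rightE (fun h : R => h^-1 *: (F (h *: v + t) - F t))) //.
  apply: cvg_trans dfc; apply: cvg_app.
  move=> A [e egt0 Ae]; exists e => // x xe xgt0; apply: Ae => //.
  exact/lt0r_neq0.
near=> h.
have h0 : 0 < h by near: h; exists 1 => /=.
rewrite /GRing.scale /=; apply: mulr_ge0; first by rewrite invr_ge0 ltW.
by rewrite subr_ge0 Fmin.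
Unshelve. all: by end_near. Qed.

Lemma derive_right_ge0 (F : V -> R^o) t v : derivable F t v ->
  (forall h : R, 0 < h -> F t <= F (h *: v + t)) -> 0 <= 'D_v F t.
Proof.
move=> dv Fmin.
rewrite /derive (cvg_at_rightE (fun h : R => h^-1 *: (F (h *: v + t) - F t))); last exact: dv.
apply: limr_ge.
  have := dv; rewrite /derivable => dfc.
  rewrite -(cvg_at_rightE (fun h : R => h^-1 *: (F (h *: v + t) - F t))) //.
  apply: cvg_trans dfc; apply: cvg_app.
  move=> A [e egt0 Ae]; exists e => // x xe xgt0; apply: Ae => //.
  exact/lt0r_neq0.
near=> h.
have h0 : 0 < h by near: h; exists 1 => /=.
rewrite /GRing.scale /=; apply: mulr_ge0; first by rewrite invr_ge0 ltW.
by rewrite subr_ge0 Fmin.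
Unshelve. all: by end_near. Qed.

Lemma DD a b x v : differentiable a x -> differentiable b x ->
  'D_v (fun z => a z + b z) x = 'D_v a x + 'D_v b x.
Proof. by move=> da db; rewrite deriveD //; apply: diff_derivable. Qed.
Lemma DB a b x v : differentiable a x -> differentiable b x ->
  'D_v (fun z => a z - b z) x = 'D_v a x - 'D_v b x.
Proof. by move=> da db; rewrite deriveB //; apply: diff_derivable. Qed.
Lemma DM a b x v : differentiable a x -> differentiable b x ->
  'D_v (fun z => a z * b z) x = a x * 'D_v b x + b x * 'D_v a x.
Proof. by move=> da db; rewrite deriveM //; apply: diff_derivable. Qed.
Lemma DC (c : R) x v : 'D_v (fun _ : V => c : R^o) x = 0.
Proof. exact: derive_cst. Qed.
Lemma Dsum (F : 'I_n -> V -> R^o) x v : (forall i, differentiable (F i) x) ->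
  'D_v (fun z => \sum_(i < n) F i z) x = \sum_(i < n) 'D_v (F i) x.
Proof.
move=> H; have -> : (fun z => \sum_(i < n) F i z) = \sum_(i < n) F i.
  by apply/funext => z; rewrite fct_sumE.
by rewrite derive_sum // => i; apply: diff_derivable.
Qed.
Lemma Dco i x v : 'D_v (fun z : V => z 0 i : R^o) x = v 0 i.
Proof.
have := @derive_mx R V 1 n id x v (@derivable_id R V x v).
by rewrite derive_id => e; rewrite {2}e mxE.
Qed.
Lemma DcoF (F : V -> V) i x v : differentiable F x ->
  'D_v (fun z => F z 0 i : R^o) x = 'D_v F x 0 i.
Proof.
by move=> dF; rewrite derive_mx ?mxE //; apply: diff_derivable.
Qed.
Lemma Ddot (F H : V -> V) x v : differentiable F x -> differentiable H x ->
  'D_v (fun z => dotv (F z) (H z) : R^o) x = dotv (F x) ('D_v H x) + dotv ('D_v F x) (H x).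
Proof.
move=> dF dH; rewrite /dotv (Dsum (F := fun i z => F z 0 i * H z 0 i)); last first.
  by move=> i; apply: dM; apply: dcoF.
rewrite -big_split /=; apply: eq_bigr => i _.
rewrite (DM (a := fun z => F z 0 i : R^o) (b := fun z => H z 0 i : R^o)); try exact: dcoF.
rewrite !DcoF //; ring.
Qed.

Lemma dsub (y : V) x : differentiable (fun z : V => y - z) x.
Proof.
have -> : (fun z : V => y - z) = cst y - id by [].
by apply: differentiableB.
Qed.
Lemma Dsub (y : V) x v : 'D_v (fun z : V => y - z) x = - v.
Proof.
have -> : (fun z : V => y - z) = cst y - id by [].
by rewrite deriveB // derive_cst derive_id sub0r.
Qed.
End Diff.

Section Geo.
Variables (R : realType) (n : nat) (Rr : R) (f : 'rV[R]_n -> R^o).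
Local Notation V := 'rV[R]_n.
Hypothesis Rr0 : 0 < Rr.
Hypothesis fpos : forall t, 0 < f t.
Hypothesis fdiff : forall t, differentiable f t.
Hypothesis fcvx : convex_function setT (f : convex_lmodType V -> R^o).
Hypothesis hout : forall t, Rr ^+ 2 < sqnorm t + f t ^+ 2.

Definition gr t := gradient f t.
Definition sq t := Num.sqrt (1 + sqnorm (gr t)).
Definition kk t := (1 / (2 * sq t)) * ((sqnorm t + f t ^+ 2 - Rr ^+ 2) / (Rr - alpha f t)).
Definition rho t := kk t * sq t.
Definition hh t := f t - kk t.

Lemma xmapE t : xmap Rr f t = t + kk t *: gr t.
Proof. by []. Qed.

Lemma sq_gt0 t : 0 < sq t.
Proof. by rewrite sqrtr_gt0 ltr_wpDr ?sqnorm_ge0. Qed.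
Lemma sq_sqr t : sq t ^+ 2 = 1 + sqnorm (gr t).
Proof. by rewrite sqr_sqrtr // addr_ge0 ?sqnorm_ge0. Qed.

Lemma alphaE t : alpha f t * sq t = dotv t (gr t) - f t.
Proof. by rewrite /alpha -/(gr t) -/(sq t) divfK // gt_eqF // sq_gt0. Qed.

Lemma kk_gt0 t : alpha f t < Rr -> 0 < kk t.
Proof.
move=> ha; rewrite /kk mulr_gt0 // ?divr_gt0 ?mulr_gt0 ?sq_gt0 ?subr_gt0 ?hout //.
Qed.

Lemma rho_gt0 t : alpha f t < Rr -> 0 < rho t.
Proof. by move=> ha; rewrite /rho mulr_gt0 ?kk_gt0 ?sq_gt0. Qed.

Lemma kk_eq t : alpha f t < Rr ->
  sqnorm t + f t ^+ 2 - Rr ^+ 2 = 2 * rho t * (Rr - alpha f t).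
Proof.
move=> ha; rewrite /rho /kk.
have s0 : sq t != 0 by rewrite gt_eqF // sq_gt0.
have a0 : Rr - alpha f t != 0 by rewrite gt_eqF // subr_gt0.
by field; rewrite s0 a0.
Qed.

Lemma F3 t : alpha f t < Rr ->
  sqnorm (xmap Rr f t) + hh t ^+ 2 = (Rr + rho t) ^+ 2.
Proof.
move=> ha; have := kk_eq ha; have := alphaE t; have := sq_sqr t.
rewrite xmapE sqnormD sqnormZ dotvZr /hh /rho.
set s := sq t; set a := alpha f t; set k := kk t; set G := sqnorm (gr t).
set d := dotv t (gr t); set T := sqnorm t; set F := f t.
move=> e1 e2 e3.
have -> : T + 2 * (k * d) + k ^+ 2 * G + (F - k) ^+ 2 =
  (T + F ^+ 2 - Rr ^+ 2) + Rr ^+ 2 + 2 * k * (d - F) + k ^+ 2 * (1 + G) by ring.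
rewrite e3 -e2 -e1; ring.
Qed.

Lemma F4 t : sqnorm (xmap Rr f t - t) + (hh t - f t) ^+ 2 = rho t ^+ 2.
Proof.
rewrite xmapE (addrC t) addrK sqnormZ /hh /rho; have := sq_sqr t; set k := kk t; set s := sq t => e; have -> : (k * s) ^+ 2 = k ^+ 2 * s ^+ 2 by ring.
rewrite e; ring.
Qed.

Lemma F5 t u z : alpha f t < Rr -> f u <= z ->
  rho t ^+ 2 + sqnorm (u - t) <= sqnorm (xmap Rr f t - u) + (hh t - z) ^+ 2.
Proof.
move=> ha fz.
have cv := convex_grad_ineq u (fdiff t) fcvx.
have k0 := kk_gt0 ha.
have -> : xmap Rr f t - u = kk t *: gr t - (u - t) by rewrite xmapE opprB addrA (addrC t).
rewrite /hh /rho exprMn sq_sqr.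
set w := u - t in cv *; set k := kk t; set G := sqnorm (gr t); set F := f t.
set d := z - F.
have dge : dotv (gr t) w <= d by rewrite /d lerBrDl (le_trans cv fz).
have -> : (F - k - z) = - (k + d) by rewrite /d; ring.
rewrite -subr_ge0.
have -> : sqnorm (k *: gr t - w) = k ^+ 2 * G - 2 * (k * dotv (gr t) w) + sqnorm w.
  by rewrite sqnormB sqnormZ dotvZl.
have e : k ^+ 2 * G - 2 * (k * dotv (gr t) w) + sqnorm w + (- (k + d)) ^+ 2 -
   (k ^+ 2 * (1 + G) + sqnorm w) = d ^+ 2 + 2 * k * (d - dotv (gr t) w) by ring.
rewrite e; apply: addr_ge0; first exact: sqr_ge0.
apply: mulr_ge0; [apply: mulr_ge0 => //; exact: ltW | by rewrite subr_ge0].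
Qed.


Lemma xmap_inj t1 t2 : alpha f t1 < Rr -> alpha f t2 < Rr ->
  xmap Rr f t1 = xmap Rr f t2 -> t1 = t2.
Proof.
wlog hle : t1 t2 / hh t1 <= hh t2.
  move=> W a1 a2 e; have [h12|h21] := lerP (hh t1) (hh t2); first exact: W.
  by apply/esym/W => //; exact: ltW.
move=> a1 a2 e.
have fz : f t1 <= f t1 + (hh t2 - hh t1) by rewrite lerDl subr_ge0.
have A := @F5 t2 t1 _ a2 fz.
have A' := @F5 t2 t1 _ a2 (lexx (f t1)).
have F4a := F4 t1.
have C1 := F3 a1; have C2 := F3 a2.
rewrite -e in A A' C2.
have r1 := rho_gt0 a1; have r2 := rho_gt0 a2; have f1 := fpos t1.
have P0 := sqnorm_ge0 (t1 - t2).
move: A A' F4a C1 C2 hle r1 r2 f1 P0.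
set Y1 := sqnorm (xmap Rr f t1 - t1); set P := sqnorm (t1 - t2).
set Y := sqnorm (xmap Rr f t1).
set p1 := rho t1; set p2 := rho t2; set h1 := hh t1; set h2 := hh t2; set F1 := f t1.
move=> A A' F4a C1 C2 hle r1 r2 f1 P0.
have eA : p2 ^+ 2 + P <= p1 ^+ 2.
  by rewrite -F4a; apply: le_trans A _; rewrite le_eqVlt; apply/orP; left; apply/eqP; congr (_ + _); congr (_ ^+ 2); ring.
have eB : Rr * (p2 - p1) >= 0.
  have : 2 * Rr * (p2 - p1) >= P + 2 * (h2 - h1) * F1.
    have -> : 2 * Rr * (p2 - p1) = (Rr + p2) ^+ 2 - (Rr + p1) ^+ 2 - (p2 ^+ 2 - p1 ^+ 2) by ring.
    rewrite -C1 -C2 -F4a; move: A'; rewrite -subr_ge0 => A'.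
    rewrite -subr_ge0; apply: le_trans A' _; rewrite le_eqVlt; apply/orP; left; apply/eqP; ring.
  move=> H; have X : 0 <= 2 * (h2 - h1) * F1.
    by apply: mulr_ge0; [rewrite mulr_ge0 // subr_ge0 | exact: ltW].
  have := le_trans (addr_ge0 P0 X) H; rewrite -mulrA pmulr_rge0 //.
have p12 : p1 <= p2 by rewrite -subr_ge0; move: eB; rewrite pmulr_rge0.
have sq12 : p1 ^+ 2 <= p2 ^+ 2 by rewrite !expr2 ler_pM // ltW.
have Ple : P <= 0 by have := le_trans eA sq12; rewrite gerDl.
 have P00 : P = 0 by apply/eqP; rewrite eq_le Ple P0.
by apply/eqP; rewrite -subr_eq0; apply/eqP; apply: sqnorm_eq0.
Qed.


Lemma f_cont : continuous f.
Proof. by move=> t; apply: differentiable_continuous. Qed.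

Lemma sqnorm_coord (u : V) i : u 0 i ^+ 2 <= sqnorm u.
Proof.
rewrite /sqnorm /dotv (bigD1 i) //= expr2 lerDl.
by apply: sumr_ge0 => j _; rewrite -expr2 sqr_ge0.
Qed.

Definition phi (y : V) (h : R) (u : V) : R := sqnorm (y - u) + (h - f u) ^+ 2.

Lemma phi_diff y h u : differentiable (phi y h : V -> R^o) u.
Proof.
have -> : (phi y h : V -> R^o) = fun z => \sum_(i < n) ((y 0 i - z 0 i) * (y 0 i - z 0 i)) + (h - f z) * (h - f z).
  apply/funext => z; rewrite /phi /sqnorm /dotv expr2; congr (_ + _).
  by apply: eq_bigr => i _; rewrite !mxE.
apply: dD.
  apply: (dsum (F := fun i z => (y 0 i - z 0 i) * (y 0 i - z 0 i))) => i.
  by apply: dM; apply: dB; [exact: dC | exact: dco | exact: dC | exact: dco].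
by apply: dM; apply: dB => //; exact: dC.
Qed.

Lemma derive_phi y h t v : 'D_v (phi y h : V -> R^o) t =
  - 2 * dotv (y - t) v - 2 * (h - f t) * dotv (gr t) v.
Proof.
have -> : (phi y h : V -> R^o) = fun z => dotv (y - z) (y - z) + (h - f z) * (h - f z).
  by apply/funext => z; rewrite /phi expr2.
rewrite DD; first last.
- by apply: dM; apply: dB => //; exact: dC.
- by apply: ddot; apply: dsub.
rewrite Ddot ?dsub // Dsub DM; try by apply: dB => //; exact: dC.
rewrite (DB (a := fun _ => h : R^o) (b := f)) ?fdiff //.
rewrite DC derive_grad // -/(gr t) dotvNr dotvNl (dotvC v); ring.
Qed.

Lemma sq_gt (a M : R) : 0 < M -> (a < - M) || (M < a) -> M ^+ 2 < a ^+ 2.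
Proof. by move=> M0 /orP[] H; nra. Qed.

Lemma phi_min y h : exists u0, forall u, phi y h u0 <= phi y h u.
Proof.
set M := `|h - f y| + 1.
have M0 : 0 < M by rewrite /M ltr_wpDl.
pose A := [set u : V | forall i, `[y 0 i - M, y 0 i + M]%classic (u 0 i)].
have cA : compact A.
  by apply: (@rV_compact _ _ (fun i => `[y 0 i - M, y 0 i + M]%classic)) => i; exact: segment_compact.
have yA : A y.
  by move=> i /=; rewrite in_itv /= lerBlDr lerDl ltW //= lerDl ltW.
have A0 : A !=set0 by exists y.
have pc : continuous (phi y h) := fun u => differentiable_continuous (phi_diff y h u).
have [c cA' cmin] := EVT_min_rV A0 cA (continuous_subspaceT pc).
exists c => u.
have [uA|uA] := pselect (A u).
  by apply: cmin; rewrite inE.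
have cy : phi y h c <= phi y h y by apply: cmin; rewrite inE.
apply: (le_trans cy).
move/existsNP: uA => [i /negP]; rewrite in_itv /= negb_and -!ltNge => uI.
have : M ^+ 2 < (y - u) 0 i ^+ 2.
  apply: sq_gt => //; rewrite !mxE; case/orP: uI => H; apply/orP; [right|left]; lra.
move=> /lt_le_trans /(_ (sqnorm_coord _ i)) H.
rewrite /phi subrr /sqnorm /dotv big1 ?add0r; last by move=> j _; rewrite mxE mul0r.
apply: le_trans (_ : M ^+ 2 <= _); last first.
  by apply: le_trans (ltW H) _; rewrite lerDl sqr_ge0.
rewrite /M -(real_normK (num_real (h - f y))) ler_pXn2r ?inE ?normr_ge0 ?addr_ge0 //.
- by rewrite lerDl.
- by rewrite nnegrE addr_ge0.
Qed.

Lemma sqrt_lip (a x z : R) : 0 <= a ->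
  `|Num.sqrt (a + x ^+ 2) - Num.sqrt (a + z ^+ 2)| <= `|x - z|.
Proof.
move=> a0.
have ax : 0 <= a + x ^+ 2 by rewrite addr_ge0 ?sqr_ge0.
have az : 0 <= a + z ^+ 2 by rewrite addr_ge0 ?sqr_ge0.
rewrite -!sqrtr_sqr ler_sqrt ?sqr_ge0 //.
rewrite !sqrrB !sqr_sqrtr //.
have : a + x * z <= Num.sqrt (a + x ^+ 2) * Num.sqrt (a + z ^+ 2).
  rewrite -sqrtrM // (le_trans (ler_norm _)) // -sqrtr_sqr ler_sqrt; last first.
    by rewrite mulr_ge0.
  rewrite -subr_ge0.
  have -> : (a + x ^+ 2) * (a + z ^+ 2) - (a + x * z) ^+ 2 = a * (x - z) ^+ 2 by ring.
  by rewrite mulr_ge0 ?sqr_ge0.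
lra.
Qed.


Lemma phi_sqrt_lip y h h' u :
  `|Num.sqrt (phi y h u) - Num.sqrt (phi y h' u)| <= `|h - h'|.
Proof.
rewrite /phi; have := sqrt_lip (h - f u) (h' - f u) (sqnorm_ge0 (y - u)).
by have -> : h - f u - (h' - f u) = h - h' by ring.
Qed.

Lemma xmap_surj y : exists2 t, alpha f t < Rr & xmap Rr f t = y.
Proof.
have [U HU] := choice (phi_min y).
pose D h := Num.sqrt (phi y h (U h)).
have DL : forall h h', D h <= D h' + `|h - h'|.
  move=> h h'; rewrite /D.
  have e1 : Num.sqrt (phi y h (U h)) <= Num.sqrt (phi y h (U h')).
    by rewrite ler_sqrt ?HU // addr_ge0 ?sqnorm_ge0 ?sqr_ge0.
  apply: le_trans e1 _; rewrite -lerBlDl.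
  by apply: le_trans (ler_norm _) (phi_sqrt_lip _ _ _ _).
pose m h := D h - Num.sqrt (sqnorm y + h ^+ 2) + Rr.
have mL : forall h h', `|m h - m h'| <= 2 * `|h - h'|.
  move=> h h'.
  have e2 := sqrt_lip h h' (sqnorm_ge0 y).
  have e3 := DL h h'; have e4 := DL h' h; rewrite distrC in e4.
  rewrite /m; move: e2; set A := Num.sqrt _; set B := Num.sqrt _ => e2.
  have -> : D h - A + Rr - (D h' - B + Rr) = (D h - D h') - (A - B) by ring.
  apply: le_trans (ler_normB _ _) _.
  rewrite mulr2n mulrDl mul1r lerD // ler_norml; apply/andP; split; lra.
have mc : continuous m.
  move=> h; apply/cvgrPdist_lt => e e0.
  near=> h'.
  apply: le_lt_trans (mL h h') _.
  have : `|h - h'| < e / 2.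
    near: h'; apply/nbhs_ballP; exists (e / 2) => /=; first by rewrite divr_gt0.
    by move=> z; rewrite /ball /=.
  lra.
set hl := - (sqnorm y / Rr) - 1.
have Yge := sqnorm_ge0 y.
have YR : 0 <= sqnorm y / Rr by rewrite divr_ge0 // ltW.
have hl0 : hl < 0 by rewrite /hl; lra.
have mhl : 0 < m hl.
  rewrite /m /D; set u := U hl.
  have e1 : f u - hl <= Num.sqrt (phi y hl u).
    apply: le_trans (_ : `|hl - f u| <= _); first by rewrite distrC ler_norm.
    rewrite -sqrtr_sqr ler_sqrt /phi ?lerDr ?sqnorm_ge0 // addr_ge0 ?sqnorm_ge0 ?sqr_ge0 //.
  have e2 : Num.sqrt (sqnorm y + hl ^+ 2) < Rr - hl.
    have Rh : 0 < Rr - hl by rewrite subr_gt0 (lt_trans hl0 Rr0).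
    rewrite -(ger0_norm (ltW Rh)) -sqrtr_sqr ltr_sqrt ?exprn_gt0 //.
    have e : Rr * hl = - sqnorm y - Rr by rewrite /hl; field; rewrite gt_eqF.
    have -> : (Rr - hl) ^+ 2 = Rr ^+ 2 - 2 * (Rr * hl) + hl ^+ 2 by ring.
    rewrite e -subr_gt0.
    have -> : Rr ^+ 2 - 2 * (- sqnorm y - Rr) + hl ^+ 2 - (sqnorm y + hl ^+ 2) =
       Rr ^+ 2 + sqnorm y + 2 * Rr by ring.
    by apply: ltr_wpDl; [rewrite addr_ge0 ?sqr_ge0 | rewrite mulr_gt0].
  have := fpos u; lra.
have hle : hl <= f y by have := fpos y; lra.
have p0 : phi y (f y) y = 0 by rewrite /phi !subrr /sqnorm dotv0l expr0n /= addr0.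
have mfy : m (f y) < 0.
  rewrite /m /D.
  have e1 : Num.sqrt (phi y (f y) (U (f y))) <= 0.
    by rewrite -sqrtr0 -p0 ler_sqrt ?HU // p0.
  have e2 : Rr < Num.sqrt (sqnorm y + f y ^+ 2).
    have hy := hout y.
    rewrite -(ger0_norm (ltW Rr0)) -sqrtr_sqr ltr_sqrt //.
    by apply: le_lt_trans hy; rewrite sqr_ge0.
  lra.
have H3 : Num.min (m hl) (m (f y)) <= 0 <= Num.max (m hl) (m (f y)).
  by rewrite ge_min le_max; apply/andP; split; apply/orP; [right|left]; exact: ltW.
have [hs hsI mhs] : exists2 c, c \in `[hl, f y] & m c = 0.
  exact: (IVT hle (continuous_subspaceT mc) H3).
have hslt : hs < f y.
  move: hsI; rewrite in_itv /= => /andP [_ hsle].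
  rewrite lt_neqAle hsle andbT; apply/eqP => E; move: mhs; rewrite E; lra.
set t := U hs.
set k := f t - hs.
have tmin : forall u, phi y hs t <= phi y hs u := HU hs.
have Dhs : Num.sqrt (phi y hs t) = Num.sqrt (sqnorm y + hs ^+ 2) - Rr.
  by move: mhs; rewrite /m /D -/t; lra.
set w := y - t - k *: gr t.
have w0 : w = 0.
  have Dw : 'D_w (phi y hs : V -> R^o) t = 0.
    apply: fermat_dir; first exact: diff_derivable (phi_diff y hs t).
    by move=> a; apply: tmin.
  rewrite derive_phi in Dw; apply: sqnorm_eq0.
  have : sqnorm w = dotv (y - t) w - k * dotv (gr t) w.
    by rewrite /sqnorm {1}/w (dotvBl (y - t)) dotvZl.
  have e : hs - f t = - k by rewrite /k; ring.
  rewrite e in Dw; move=> ->; move: Dw.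
  set A := dotv (y - t) w; set B := dotv (gr t) w => Dw.
  have -> : A - k * B = - (-2 * A - 2 * - k * B) / 2 by field.
  by rewrite Dw oppr0 mul0r.
have yE : y = t + k *: gr t.
  by apply/eqP; rewrite -subr_eq0 opprD addrA; apply/eqP; exact: w0.
have k0 : 0 < k.
  rewrite ltNge; apply/negP => kle.
  have ftle : f t <= hs by move: kle; rewrite /k subr_le0.
  pose l (a : R) := f (a *: (t - y) + y).
  have lc : continuous l.
    move=> a; apply: differentiable_continuous; apply: differentiable_comp => //.
  have H4 : Num.min (l 0) (l 1) <= hs <= Num.max (l 0) (l 1).
    rewrite /l scale0r add0r scale1r subrK ge_min le_max; apply/andP; split; apply/orP.
      by right.
    by left; exact: ltW.
  have [a aI la] := IVT ler01 (continuous_subspaceT lc) H4.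
  move: aI; rewrite in_itv /= => /andP [a0 a1].
  have := tmin (a *: (t - y) + y).
  have -> : phi y hs (a *: (t - y) + y) = a ^+ 2 * sqnorm (t - y).
    rewrite /phi; have -> : f (a *: (t - y) + y) = hs by exact: la.
    rewrite subrr expr0n /= addr0 -sqnormN opprB addrK.
    by rewrite sqnormZ.
  rewrite /phi -sqnormN opprB.
  have a21 : a ^+ 2 <= 1 by rewrite expr_le1.
  have := sqnorm_ge0 (t - y); set P := sqnorm (t - y) => P0 H.
  have : (hs - f t) ^+ 2 <= 0.
    have : a ^+ 2 * P <= P by rewrite ler_piMl.
    move: H; set Q := (hs - f t) ^+ 2; lra.
  move=> q1.
  have kz : k = 0.
    apply/eqP; rewrite -sqrf_eq0 eq_le sqr_ge0 andbT.
    by rewrite /k -sqrrN opprB q1.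
  have yt : y = t by rewrite yE kz scale0r addr0.
  have fe : f t = hs by move: kz; rewrite /k => /eqP; rewrite subr_eq0 => /eqP.
  move: Dhs; rewrite /phi fe -yt !subrr /sqnorm dotv0l expr0n /= addr0 sqrtr0.
  move=> E; have := hout y; rewrite /sqnorm.
  have : Num.sqrt (dotv y y + hs ^+ 2) = Rr by lra.
  move=> <-; rewrite sqr_sqrtr.
    by rewrite yt fe ltxx.
  exact: (addr_ge0 (sqnorm_ge0 y) (sqr_ge0 hs)).
have s0 := sq_gt0 t.
have phiE : phi y hs t = (k * sq t) ^+ 2.
  rewrite /phi yE (addrC t) addrK sqnormZ exprMn sq_sqr.
  have -> : hs - f t = - k by rewrite /k; ring.
  ring.
have sqrtE : Num.sqrt (phi y hs t) = k * sq t.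
  by rewrite phiE sqrtr_sqr ger0_norm // mulr_ge0 // ltW.
have E1 : sqnorm y + hs ^+ 2 = (Rr + k * sq t) ^+ 2.
  have : Num.sqrt (sqnorm y + hs ^+ 2) = Rr + k * sq t.
    by rewrite -sqrtE Dhs; ring.
  by move=> <-; rewrite sqr_sqrtr // addr_ge0 ?sqnorm_ge0 ?sqr_ge0.
have Qe : sqnorm t + f t ^+ 2 - Rr ^+ 2 = 2 * (k * sq t) * (Rr - alpha f t).
  move: E1; rewrite yE sqnormD sqnormZ dotvZr.
  have ea := alphaE t; have es := sq_sqr t.
  have -> : hs = f t - k by rewrite /k; ring.
  move: ea es; set s := sq t; set a := alpha f t; set d := dotv t (gr t).
  set G := sqnorm (gr t); set T := sqnorm t; set F := f t.
  move=> ea es E1; apply/eqP; rewrite -subr_eq0; apply/eqP.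
  have -> : T + F ^+ 2 - Rr ^+ 2 - 2 * (k * s) * (Rr - a) =
    (T + 2 * (k * d) + k ^+ 2 * G + (F - (F - k)) ^+ 2 - k ^+ 2 + (F - k) ^+ 2 - (Rr + k * s) ^+ 2)
    + k ^+ 2 * (s ^+ 2 - 1 - G) + 2 * k * (a * s - (d - F)) by ring.
  rewrite -E1 es ea; ring.
have aR : alpha f t < Rr.
  have : 0 < 2 * (k * sq t) * (Rr - alpha f t) by rewrite -Qe subr_gt0 hout.
  by rewrite pmulr_rgt0 ?mulr_gt0 // subr_gt0.
exists t => //.
have kkE : kk t = k.
  rewrite /kk Qe; field.
  by rewrite (gt_eqF s0) subr_eq0 (gt_eqF aR).
by rewrite -[xmap Rr f t]/(t + kk t *: gr t) kkE -yE.
Unshelve. all: by end_near. Qed.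


Hypothesis gdiff : forall t, differentiable (gradient f) t.

Definition G2f (z : V) : R^o := sqnorm (gr z).
Definition ddf (z : V) : R^o := dotv z (gr z).
Definition Tf (z : V) : R^o := sqnorm z.

Lemma gr_diff x : differentiable gr x.
Proof. exact: gdiff. Qed.
Lemma G2_diff x : differentiable G2f x.
Proof. by apply: ddot; apply: gr_diff. Qed.
Lemma dd_diff x : differentiable ddf x.
Proof. by apply: ddot => //; apply: gr_diff. Qed.
Lemma T_diff x : differentiable Tf x.
Proof. by apply: ddot. Qed.
Lemma sq_diff x : differentiable (sq : V -> R^o) x.
Proof.
apply: (dsqrt (a := fun z => 1 + G2f z)); first by apply: dD; [exact: dC | exact: G2_diff].
by rewrite ltr_wpDr ?sqnorm_ge0.
Qed.
Lemma alpha_diff x : differentiable (alpha f : V -> R^o) x.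
Proof.
have -> : (alpha f : V -> R^o) = fun z => (ddf z - f z) * (sq z)^-1 by [].
apply: dM; first by apply: dB; [exact: dd_diff | exact: fdiff].
by apply: dV; [exact: sq_diff | rewrite gt_eqF // sq_gt0].
Qed.
Lemma kk_diff x : alpha f x < Rr -> differentiable (kk : V -> R^o) x.
Proof.
move=> ax.
have -> : (kk : V -> R^o) = fun z => (1 * (2 * sq z)^-1) *
   ((Tf z + f z * f z - Rr ^+ 2) * (Rr - alpha f z)^-1).
  by apply/funext => z; rewrite /kk expr2.
apply: dM.
  apply: dM; first exact: dC.
  apply: dV; first by apply: dM; [exact: dC | exact: sq_diff].
  by rewrite mulf_neq0 // gt_eqF // sq_gt0.
apply: dM.
  apply: dB; last exact: dC.
  by apply: dD; [exact: T_diff | apply: dM].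
apply: dV; first by apply: dB; [exact: dC | exact: alpha_diff].
by rewrite subr_eq0 gt_eqF.
Qed.

Lemma xmap_diff x : alpha f x < Rr -> differentiable (xmap Rr f) x.
Proof.
move=> ax.
have -> : xmap Rr f = fun z => z + \sum_(i < n) ((kk z * gr z 0 i) *: (delta_mx 0 i : V)).
  apply/funext => z; rewrite xmapE; congr (_ + _).
  rewrite {1}(row_sum_delta (gr z)) scaler_sumr; apply: eq_bigr => i _.
  by rewrite scalerA.
apply: differentiableD => //.
have -> : (fun z => \sum_(i < n) ((kk z * gr z 0 i) *: (delta_mx 0 i : V))) =
   \sum_(i < n) (fun z => (kk z * gr z 0 i) *: (delta_mx 0 i : V)).
  by apply/funext => z; rewrite fct_sumE.
apply: differentiable_sum => i.
apply: (differentiableZl (k := fun z => kk z * gr z 0 i : R^o)).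
apply: dM; first exact: kk_diff.
by apply: dcoF; exact: gr_diff.
Qed.


Lemma D_xmap x v : alpha f x < Rr ->
  'D_v (xmap Rr f) x = v + kk x *: 'D_v gr x + 'D_v (kk : V -> R^o) x *: gr x.
Proof.
move=> ax; apply/rowP => j.
rewrite -(DcoF j v (xmap_diff ax)).
have -> : (fun z => xmap Rr f z 0 j : R^o) = fun z => z 0 j + kk z * gr z 0 j.
  by apply/funext => z; rewrite xmapE !mxE.
rewrite DD; first last.
- by apply: dM; [exact: kk_diff | apply: dcoF; exact: gr_diff].
- exact: dco.
rewrite Dco DM; first last.
- by apply: dcoF; exact: gr_diff.
- exact: kk_diff.
rewrite DcoF; last exact: gr_diff.
by rewrite !mxE; ring.
Qed.

Lemma D_sq x v : 'D_v (sq : V -> R^o) x = dotv (gr x) ('D_v gr x) / sq x.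
Proof.
have e : (fun z => sq z * sq z - G2f z : R^o) = fun _ => 1.
  by apply/funext => z; rewrite -expr2 sq_sqr /G2f addrK.
have := congr1 (fun F => 'D_v F x) e; rewrite /= DC.
rewrite (DB (a := fun z => sq z * sq z : R^o) (b := G2f)); first last.
- exact: G2_diff.
- by apply: dM; exact: sq_diff.
rewrite DM; try exact: sq_diff.
rewrite /G2f (Ddot v (gr_diff x) (gr_diff x)) (dotvC ('D_v gr x)) => E.
have s0 : sq x != 0 by rewrite gt_eqF // sq_gt0.
apply: (mulfI s0); rewrite mulrCA divff // mulr1.
have two0 : (2 : R) != 0 by rewrite pnatr_eq0.
apply: (mulfI two0).
apply/eqP; rewrite -subr_eq0; apply/eqP; rewrite -E; ring.
Qed.

Lemma grad_mono x u : 0 <= dotv (gr u - gr x) (u - x).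
Proof.
have c1 := convex_grad_ineq u (fdiff x) fcvx.
have c2 := convex_grad_ineq x (fdiff u) fcvx.
rewrite dotvBl; move: c1 c2; rewrite -/(gr x) -/(gr u).
have -> : x - u = - (u - x) by rewrite opprB.
rewrite dotvNr; lra.
Qed.

Lemma PSD x v : 0 <= dotv v ('D_v gr x).
Proof.
have e : 'D_v (fun z => dotv v (gr z) : R^o) x = dotv v ('D_v gr x).
  rewrite (Ddot (F := cst v) (H := gr)) ?derive_cst ?dotv0l ?addr0 //.
rewrite -e; apply: derive_right_ge0.
  by apply: diff_derivable; apply: ddot => //; exact: gr_diff.
move=> h h0; rewrite -subr_ge0 -dotvBr.
have := grad_mono x (h *: v + x); rewrite addrK dotvZr dotvC pmulr_rge0 //.
Qed.


Lemma D_T x v : 'D_v Tf x = 2 * dotv x v.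
Proof.
rewrite /Tf /sqnorm (Ddot (F := id) (H := id)) // derive_id (dotvC v); ring.
Qed.

Lemma ident z : alpha f z < Rr ->
  2 * kk z * (sq z * Rr - ddf z + f z) = Tf z + f z * f z - Rr ^+ 2.
Proof.
move=> az; have ea := alphaE z.
have -> : ddf z = alpha f z * sq z + f z by rewrite /ddf ea; ring.
by rewrite /Tf -expr2 (kk_eq az) /rho; ring.
Qed.

Lemma xmap_det x : alpha f x < Rr -> \det ('J (xmap Rr f) x) != 0.
Proof.
move=> ax; apply/negP => /det0P [v v0 vJ].
have Dv : 'D_v (xmap Rr f) x = 0 by rewrite deriveEjacobian ?vJ //; exact: xmap_diff.
rewrite D_xmap // in Dv.
have near_id : \forall z \near x,
    2 * kk z * (sq z * Rr - ddf z + f z) = Tf z + f z * f z - Rr ^+ 2.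
  have ac : alpha f @ x --> alpha f x := differentiable_continuous (alpha_diff x).
  near=> z; apply: ident; near: z; exact: cvgr_lt ac _ ax.
have := @near_eq_derive R V R^o (fun z => 2 * kk z * (sq z * Rr - ddf z + f z))
  (fun z => Tf z + f z * f z - Rr ^+ 2) x v near_id.
rewrite (DM (a := fun z => 2 * kk z : R^o) (b := fun z => sq z * Rr - ddf z + f z : R^o)); first last.
- apply: dD; last exact: fdiff.
  by apply: dB; [apply: dM; [exact: sq_diff | exact: dC] | exact: dd_diff].
- by apply: dM; [exact: dC | exact: kk_diff].
rewrite (DM (a := fun _ => 2 : R^o) (b := kk)) ?DC; first last.
- exact: kk_diff.
- exact: dC.
set dK := 'D_v (kk : V -> R^o) x.
rewrite (DD (a := fun z => sq z * Rr - ddf z : R^o) (b := f)); first last.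
- exact: fdiff.
- by apply: dB; [apply: dM; [exact: sq_diff | exact: dC] | exact: dd_diff].
rewrite (DB (a := fun z => sq z * Rr : R^o) (b := ddf)); first last.
- exact: dd_diff.
- by apply: dM; [exact: sq_diff | exact: dC].
rewrite (DM (a := sq) (b := fun _ => Rr : R^o)) ?DC; first last.
- exact: dC.
- exact: sq_diff.
rewrite D_sq /ddf (Ddot (F := id) (H := gr)) //; try exact: gr_diff.
rewrite derive_id derive_grad //.
rewrite (DB (a := fun z => Tf z + f z * f z : R^o) (b := fun _ => Rr ^+ 2 : R^o)) ?DC; first last.
- exact: dC.
- by apply: dD; [exact: T_diff | apply: dM].
rewrite (DD (a := Tf) (b := fun z => f z * f z : R^o)); first last.
- by apply: dM.
- exact: T_diff.
rewrite (DM (a := f) (b := f)) // D_T derive_grad // -/(gr x) (dotvC v (gr x)).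
move: Dv; set G := 'D_v gr x; set g := gr x; set K := kk x; set s := sq x; set F := f x.
move=> Dv I.
have dot0 : forall u : V, dotv u 0 = 0 by move=> u; rewrite dotvC dotv0l.
have Eg : dotv g v + K * dotv g G + dK * dotv g g = 0.
  by have := congr1 (dotv g) Dv; rewrite !dotvDr !dotvZr dot0.
have Ex : dotv x v + K * dotv x G + dK * dotv x g = 0.
  by have := congr1 (dotv x) Dv; rewrite !dotvDr !dotvZr dot0.
have Ev : dotv v v + K * dotv v G + dK * dotv v g = 0.
  by have := congr1 (dotv v) Dv; rewrite !dotvDr !dotvZr dot0.
have s0 : 0 < s := sq_gt0 x.
have ss : s ^+ 2 = 1 + dotv g g := sq_sqr x.
have F0 : 0 < F := fpos x.
have K0 : 0 < K := kk_gt0 ax.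
have I0 : 2 * K * (s * 0 + Rr * (dotv g G / s) - (dotv x G + dotv g v) + dotv g v) +
  (s * Rr - dotv x g + F) * (2 * dK + K * 0) -
  (2 * dotv x v + (F * dotv g v + F * dotv g v) - 0) = 0 by rewrite I subrr.
have key : (dK - dotv g v) * (Rr + F * s) = 0.
  have -> : (dK - dotv g v) * (Rr + F * s) =
    s / 2 * (2 * K * (s * 0 + Rr * (dotv g G / s) - (dotv x G + dotv g v) + dotv g v) +
    (s * Rr - dotv x g + F) * (2 * dK + K * 0) -
    (2 * dotv x v + (F * dotv g v + F * dotv g v) - 0))
    + s * (dotv x v + K * dotv x G + dK * dotv x g)
    - Rr * (dotv g v + K * dotv g G + dK * dotv g g)
    - dK * Rr * (s ^+ 2 - 1 - dotv g g).
    by field; rewrite gt_eqF.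
  by rewrite I0 Ex Eg ss; ring.
have dKa : dK = dotv g v.
  move/eqP: key; rewrite mulf_eq0 => /orP [/eqP|]; first by move/eqP; rewrite subr_eq0 => /eqP.
  by rewrite gt_eqF // ltr_wpDr // ?mulr_ge0 // ltW.
have p0 := PSD x v; rewrite -/G in p0.
have vv : sqnorm v <= 0.
  rewrite /sqnorm; move: Ev; rewrite dKa (dotvC v g) => Ev.
  have : dotv v v = - (K * dotv v G) - dotv g v * dotv g v.
    by apply/eqP; rewrite -subr_eq0 -[X in _ == X]Ev; apply/eqP; ring.
  move=> ->; rewrite -opprD oppr_le0.
  apply: addr_ge0; first by apply: mulr_ge0 => //; exact: ltW.
  by rewrite -expr2 sqr_ge0.
have : v = 0 by apply: sqnorm_eq0; apply/eqP; rewrite eq_le vv sqnorm_ge0.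
by move/eqP: v0.
Unshelve. all: by end_near. Qed.

End Geo.

Unset Implicit Arguments.

Theorem theorem10 (R : realType) (n : nat) (Rr : R) (f : 'rV[R]_n -> R^o) :
  (0 < n)%N -> 0 < Rr ->
  (forall t, 0 < f t) ->
  C2 f ->
  convex_function setT (f : convex_lmodType 'rV[R]_n -> R^o) ->
  (forall t, Rr ^+ 2 < sqnorm t + f t ^+ 2) ->
  set_bij [set t | alpha f t < Rr] setT (xmap Rr f) /\
  (forall t, alpha f t < Rr ->
     differentiable (xmap Rr f) t /\ \det ('J (xmap Rr f) t) != 0).
Proof.
move=> _ Rr0 fpos [fd [gd _]] cvx hout.
split.
  split.
  - by move=> t _.
  - by move=> t1 t2; rewrite !inE /= => a1 a2; exact: (xmap_inj Rr0 fpos fd cvx hout).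
  - move=> y _; have [t at0 e] := xmap_surj Rr0 fpos fd hout y.
    by exists t.
move=> t at0; split; first exact: (xmap_diff fd gd).
exact: (xmap_det Rr0 fpos fd cvx hout gd).
Qed.
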